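(* Let $\mathbf{f}$ be the Fibonacci word and $\phi=\frac{1+\sqrt5}{2}$. There is a constant $c\le \frac{4}{\sqrt5}\phi\approx 2.89$ such that for every positive integer $k$ and every index $i\ge 0$ of $\mathbf{f}$, there is a $k$-antipower with block length at most $ck$ starting at position $i$ of $\mathbf{f}$.
   Context: The Fibonacci word is $\mathbf{f}=\sigma^{\omega}(0)=0100101001001\cdots$, the fixed point of the morphism $\sigma(0)=01$, $\sigma(1)=0$ (i.e. the infinite word having every $\sigma^n(0)$ as a prefix). Words are indexed from $0$. A $k$-antipower is a word that is the concatenation of $k$ pairwise distinct words (blocks) of equal length; that common length is the block length. *)

(* Defs.v *)
From mathcomp Require Import all_boot.
From Stdlib Require Import Reals.

Definition fib_sigma_letter (a : nat) : seq nat :=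
  if a == 0 then [:: 0; 1] else [:: 0].

Definition fib_sigma (w : seq nat) : seq nat := flatten (map fib_sigma_letter w).

Definition fib_prefix (n : nat) : seq nat := iter n fib_sigma [:: 0].

(* The Fibonacci word f = sigma^omega(0), indexed from 0: its i-th letter is the
   i-th letter of sigma^n(0) for any n with |sigma^n(0)| > i; n = i.+1 suffices
   since |sigma^n(0)| = F_{n+2} > n. *)
Definition fibword (i : nat) : nat := nth 0 (fib_prefix i.+1) i.

Definition factor (x : nat -> nat) (p m : nat) : seq nat :=
  [seq x (p + t) | t <- iota 0 m].

Definition antipower_at (x : nat -> nat) (i k m : nat) : bool :=
  uniq [seq factor x (i + j * m) m | j <- iota 0 k].

Definition golden_ratio : R := ((1 + sqrt 5) / 2)%R.

(* Main.v *)
Require Import Defs.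
From mathcomp Require Import all_boot.
From Stdlib Require Import Reals.
From mathcomp Require Import zify.
From Stdlib Require Import Lra Lia ZArith.
Open Scope R_scope.

Definition s5 := sqrt 5.
Definition bt := (s5 - 1) / 2.

Lemma s5_sq : s5 * s5 = 5. Proof. unfold s5; apply sqrt_sqrt; lra. Qed.
Lemma s5_bounds : 2 < s5 < 3.
Proof.
  have h := s5_sq. have p : 0 < s5 by unfold s5; apply sqrt_lt_R0; lra.
  split; nra.
Qed.
Lemma bt_sq : bt * bt = 1 - bt.
Proof. unfold bt. have h := s5_sq. nra. Qed.
Lemma bt_bounds : 1/2 < bt < 1.
Proof. unfold bt. have h := s5_bounds. lra. Qed.

Lemma irr5 (n m : nat) : (0 < n)%nat -> (5 * n * n)%nat <> (m * m)%nat.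
Proof.
  move=> n0 E.
  have m0 : (0 < m)%nat.
  { case: m E => [|m]; last by []. rewrite muln0 => /eqP. rewrite !muln_eq0. lia. }
  have := congr1 (logn 5) E.
  rewrite !lognM //; try lia.
  rewrite (@logn_prime 5 5) //=. lia.
Qed.

Lemma bt_irr (n a : nat) : (0 < n)%nat -> INR n * bt <> INR a.
Proof.
  move=> n0 E.
  have E2 : s5 * INR n = INR (2 * a + n).
  { rewrite plus_INR mult_INR /=. unfold bt in E. lra. }
  have E3 : INR (5 * n * n) = INR ((2*a+n) * (2*a+n)).
  { rewrite !mult_INR -E2. have h := s5_sq. simpl. nra. }
  apply: (irr5 n (2*a+n) n0). by apply INR_eq.
Qed.
Lemma bt_lt : bt < 5/8.
Proof. unfold bt. have h := s5_sq. have p : 0 < s5 by unfold s5; apply sqrt_lt_R0; lra. nra. Qed.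
Lemma Int_part_uniq (x : R) (a : Z) : IZR a <= x < IZR a + 1 -> Int_part x = a.
Proof.
  move=> [h1 h2]. unfold Int_part.
  have -> : up x = (a + 1)%Z.
  { symmetry; apply tech_up; rewrite plus_IZR; lra. }
  lia.
Qed.

Definition frac (x : R) := x - IZR (Int_part x).
Lemma frac_bounds x : 0 <= frac x < 1.
Proof. have [h1 h2] := base_Int_part x. unfold frac; lra. Qed.
Lemma frac_char x a : IZR a <= x < IZR a + 1 -> frac x = x - IZR a.
Proof. move=> h. unfold frac. by rewrite (Int_part_uniq x a h). Qed.

Definition G (n : nat) : nat := Z.to_nat (Int_part (INR n * bt)).
Lemma G_spec n : INR (G n) <= INR n * bt < INR (G n) + 1.
Proof.
  have [h1 h2] := base_Int_part (INR n * bt).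
  have hb := bt_bounds. have hn := pos_INR n.
  have h0 : (0 <= Int_part (INR n * bt))%Z.
  { apply le_IZR. have : -1 < IZR (Int_part (INR n * bt)) by nra.
    move=> h. have : (-1 < Int_part (INR n * bt))%Z by apply lt_IZR. move=> h'. apply IZR_le. lia. }
  unfold G. rewrite INR_IZR_INZ Z2Nat.id //. lra.
Qed.
Lemma G_uniq n a : INR a <= INR n * bt < INR a + 1 -> G n = a.
Proof.
  move=> h. unfold G. rewrite (Int_part_uniq _ (Z.of_nat a)); first by rewrite Nat2Z.id.
  by rewrite -INR_IZR_INZ.
Qed.
Lemma INR_lt1 a b : INR a < INR b + 1 -> (a <= b)%nat.
Proof. move=> h. have : (a < b + 1)%nat. apply/ltP; apply INR_lt. rewrite plus_INR /=. lra. lia. Qed.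
Lemma G0 : G 0 = 0%nat.
Proof. apply G_uniq. simpl. lra. Qed.
Lemma G1 : G 1 = 0%nat.
Proof. apply G_uniq. have := bt_bounds. simpl. lra. Qed.
Lemma G2 : G 2 = 1%nat.
Proof. apply G_uniq. have := bt_bounds. simpl. lra. Qed.
Lemma G_step n : G n.+1 = G n \/ G n.+1 = (G n).+1.
Proof.
  have h1 := G_spec n. have h2 := G_spec n.+1. rewrite S_INR in h2.
  have hb := bt_bounds.
  have a1 : (G n <= G n.+1)%nat. { apply INR_lt1. lra. }
  have a2 : (G n.+1 <= (G n).+1)%nat. { apply INR_lt1. rewrite S_INR. lra. }
  lia.
Qed.
Lemma keyA n :
  let a := G n.+1 in
  G (n + a + 1) = n /\ G (n + a + 2) = n.+1 /\
  (G n.+2 = a.+1 -> G (n + a + 3) = n.+1).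
Proof.
  move=> a.
  have hs := G_spec n.+1. fold a in hs.
  have hs2 := G_spec n.+2.
  have hb := bt_bounds. have hq := bt_sq.
  set N := INR n.+1 in hs.
  set A := INR a in hs.
  set th := N * bt - A.
  have thnz : th <> 0.
  { unfold th. move=> h. apply: (bt_irr n.+1 a) => //. rewrite -/N -/A. lra. }
  have th0 : 0 < th.
  { have h : 0 <= th by unfold th; lra. destruct (Rle_lt_or_eq_dec _ _ h) => //. exfalso; apply thnz; lra. }
  have th1 : th < 1 by unfold th; lra.
  have key : forall c : nat, INR (n + a + c) * bt = INR n + 1 - th * bt + (INR c - 1) * bt.
  { move=> c. rewrite !plus_INR.
    have -> : INR n = N - 1 by unfold N; rewrite S_INR; lra.
    have e1 : N * (bt * bt) = N * (1 - bt) by rewrite hq.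
    have e2 : A = N * bt - th by unfold th; lra.
    rewrite -/A e2. nra. }
  have thdef : th = N * bt - A by [].
  clearbody th.
  split; [|split].
  - apply G_uniq. rewrite key. simpl INR. split; nra.
  - apply G_uniq. rewrite key. rewrite S_INR. simpl INR. split; nra.
  - move=> E. apply G_uniq. rewrite key S_INR.
    rewrite E in hs2. rewrite S_INR in hs2.
    have ht : 1 - bt <= th.
    { rewrite thdef. have : INR n.+2 = N + 1 by unfold N; rewrite !S_INR; lra. move=> e. rewrite e -/A in hs2. nra. }
    have ht' : th <> 1 - bt.
    { move=> e. apply: (bt_irr n.+2 a.+1) => //. rewrite thdef in e.
      rewrite S_INR. have : INR n.+2 = N + 1 by unfold N; rewrite !S_INR; lra. move=> e'. rewrite (S_INR a) -/N -/A. lra. }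
    have ht2 : 1 - bt < th.
    { destruct (Rle_lt_or_eq_dec _ _ ht) => //. exfalso; apply ht'; lra. }
    simpl INR. split; nra.
Qed.
Definition w (n : nat) : nat := (1 - (G n.+2 - G n.+1))%nat.

Lemma w_cases n : (G n.+2 = G n.+1 /\ w n = 1%nat) \/ (G n.+2 = (G n.+1).+1 /\ w n = 0%nat).
Proof. rewrite /w. case: (G_step n.+1) => ->; [left|right]; split => //; lia. Qed.

Lemma size_sigma s : size (fib_sigma s) = (size s + count (pred1 0%nat) s)%nat.
Proof.
  elim: s => [|x s IH] //=. rewrite /fib_sigma /= size_cat -/(fib_sigma s) IH.
  rewrite /fib_sigma_letter. case: (x == 0%nat) => /=; lia.
Qed.

Lemma sigma_rcons s x : fib_sigma (rcons s x) = fib_sigma s ++ fib_sigma_letter x.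
Proof. by rewrite /fib_sigma map_rcons flatten_rcons. Qed.

Lemma sigma_w n : fib_sigma (mkseq w n) = mkseq w (n + G n.+1).
Proof.
  elim: n => [|n IH]. { by rewrite G1. }
  rewrite mkseqS sigma_rcons IH.
  have [A1 [A2 A3]] := keyA n.
  set a := G n.+1 in A1 A2 A3 IH *.
  have wa : w (n + a) = 0%nat.
  { rewrite /w. have -> : (n + a).+2 = (n + a + 2)%nat by lia.
    have -> : (n + a).+1 = (n + a + 1)%nat by lia. rewrite A1 A2. lia. }
  case: (w_cases n) => [[E ->]|[E ->]].
  - rewrite /fib_sigma_letter /=. rewrite E -/a.
    have -> : (n.+1 + a = (n + a).+1)%nat by lia.
    by rewrite mkseqS cats1 wa.
  - rewrite /fib_sigma_letter /=. rewrite E -/a.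
    have -> : (n.+1 + a.+1 = (n + a).+1.+1)%nat by lia.
    rewrite mkseqS mkseqS -cats1 -cats1 -catA /= wa.
    have -> : w (n + a).+1 = 1%nat.
    { rewrite /w. have -> : (n + a).+1.+2 = (n + a + 3)%nat by lia.
      have -> : (n + a).+1.+1 = (n + a + 2)%nat by lia. rewrite A2 (A3 E). lia. }
    by [].
Qed.

Lemma prefix_w N : exists L, (N < L)%nat /\ fib_prefix N = mkseq w L.
Proof.
  elim: N => [|N [L [HL E]]].
  - exists 1%nat. split => //. rewrite /mkseq /= /w G2 G1. by [].
  - exists (L + G L.+1)%nat. split.
    + have : (1 <= G L.+1)%nat.
      { have h := G_spec L.+1. have hb := bt_bounds. rewrite S_INR in h.
        have h1 : 1 <= INR L by apply (le_INR 1); lia.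
        have h2 : INR 1 < INR (G L.+1) + 1 by simpl; nra.
        exact: (INR_lt1 _ _ h2). }
      lia.
    + by rewrite /fib_prefix iterS -/(fib_prefix N) E sigma_w.
Qed.

Lemma fibword_w n : fibword n = w n.
Proof.
  have [L [HL E]] := prefix_w n.+1.
  by rewrite /fibword E nth_mkseq //; lia.
Qed.
Fixpoint fib (n : nat) : nat :=
  match n with 0 => 0%nat | S p => match p with 0 => 1%nat | S q => (fib p + fib q)%nat end end.
Lemma fibSS n : fib n.+2 = (fib n.+1 + fib n)%nat. Proof. by []. Qed.

Lemma negpow x n : (- x) ^ n = if odd n then - x ^ n else x ^ n.
Proof.
  elim: n => [|n IH] /=; first by [].
  rewrite IH. case: (odd n) => /=; ring.
Qed.

Lemma I1 k : INR (fib k.+1) * bt - INR (fib k) = - (- bt) ^ k.+1.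
Proof.
  elim: k => [|k IH]. { simpl. lra. }
  rewrite fibSS plus_INR.
  have e : (- bt) ^ k.+2 = (- bt) * (- bt) ^ k.+1 by [].
  rewrite e. have hq := bt_sq. 
  have : (INR (fib k.+1) + INR (fib k)) * bt - INR (fib k.+1) = - bt * (INR (fib k.+1) * bt - INR (fib k)).
  { have : INR (fib k.+1) * (bt * bt) = INR (fib k.+1) * (1 - bt) by rewrite hq. nra. }
  move=> ->. rewrite IH. ring.
Qed.

Lemma fib_pos n : (0 < fib n.+1)%nat.
Proof. elim: n => [|n IH] //. rewrite fibSS. lia. Qed.
Lemma fib_mono n : (fib n <= fib n.+1)%nat.
Proof. case: n => [|n] //. rewrite fibSS. lia. Qed.

Lemma shift z t k :
  0 <= frac (z + INR t * bt) - (- bt) ^ k.+1 < 1 ->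
  frac (z + INR (t + fib k.+1) * bt) = frac (z + INR t * bt) - (- bt) ^ k.+1.
Proof.
  move=> h.
  have e := I1 k.
  rewrite (frac_char _ (Int_part (z + INR t * bt) + Z.of_nat (fib k))).
  - unfold frac. rewrite plus_IZR -INR_IZR_INZ plus_INR. lra.
  - move: h. unfold frac. rewrite plus_IZR -INR_IZR_INZ plus_INR. lra.
Qed.

Definition Hprop n := forall z, exists t, (t < fib n.+2)%nat /\ frac (z + INR t * bt) < bt ^ n.

Lemma Hall n : Hprop n.
Proof.
  suff : Hprop n /\ Hprop n.+1 by case.
  elim: n => [|n [IH1 IH2]].
  - split.
    + move=> z. exists 0%nat. split => //. have := frac_bounds (z + INR 0 * bt). simpl. lra.
    + move=> z. have hb := bt_bounds.
      case: (Rlt_le_dec (frac (z + INR 0 * bt)) bt) => h.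
      * exists 0%nat. split => //. simpl; simpl in h; lra.
      * exists 1%nat. split => //.
        simpl INR. rewrite Rmult_0_l Rmult_1_l Rplus_0_r in h *.
        rewrite (frac_char _ (Int_part z + 1)).
        -- move: h. have := base_Int_part z. unfold frac. rewrite plus_IZR. simpl. lra.
        -- move: h. have := base_Int_part z. unfold frac. rewrite plus_IZR. simpl. lra.
  - split => //.
    move=> z.
    have hb := bt_bounds. have hq := bt_sq.
    set p := bt ^ n.
    have p0 : 0 < p by apply pow_lt; lra.
    have e1 : bt ^ n.+1 = bt * p by [].
    have e2 : bt ^ n.+2 = p - bt * p.
    { have -> : bt ^ n.+2 = (bt * bt) * p by rewrite /= /p; ring. rewrite hq; ring. }
    have e3 : bt ^ n.+3 = 2 * (bt * p) - p.
    { have -> : bt ^ n.+3 = bt * (bt ^ n.+2) by []. rewrite e2.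
      have -> : bt * (p - bt * p) = p * bt - (bt * bt) * p by ring. rewrite hq; ring. }
    have bp0 : 0 < bt * p by nra.
    have bp1 : bt * p < p by nra.
    have bp2 : bt * p < 5/8 * p by have := bt_lt; nra.
    have f4 := fibSS n.+2. have f3 := fibSS n.+1.
    have fp1 := fib_pos n. have fp2 := fib_pos n.+1.
    case/boolP: (odd n) => on.
    + have [t0 [ht0 hx]] := IH1 z.
      set x0 := frac (z + INR t0 * bt) in hx *. rewrite -/p in hx.
      have hx0 := frac_bounds (z + INR t0 * bt). rewrite -/x0 in hx0.
      case: (Rlt_le_dec x0 (bt ^ n.+2)) => c1.
      * exists t0. split => //. lia.
      * case: (Rlt_le_dec x0 (bt ^ n.+1)) => c2.
        -- exists (t0 + fib n.+3)%nat. split; first lia.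
           have s3 : (- bt) ^ n.+3 = bt ^ n.+3 by rewrite negpow /= on.
           rewrite shift -/x0 s3; lra.
        -- exists (t0 + fib n.+1)%nat. split; first lia.
           have s1 : (- bt) ^ n.+1 = bt ^ n.+1 by rewrite negpow /= on.
           rewrite shift -/x0 s1; lra.
    + have [t1 [ht1 hx]] := IH2 z.
      set x1 := frac (z + INR t1 * bt) in hx *. rewrite -/p in hx.
      have hx1 := frac_bounds (z + INR t1 * bt). rewrite -/x1 in hx1.
      case: (Rlt_le_dec x1 (bt ^ n.+2)) => c1.
      * exists t1. split => //. lia.
      * exists (t1 + fib n.+2)%nat. split; first lia.
        have s2 : (- bt) ^ n.+2 = bt ^ n.+2.
        { rewrite negpow. have -> : odd n.+2 = odd n by rewrite /= negbK. by rewrite (negbTE on). }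
        rewrite shift -/x1 s2; lra.
Qed.
Lemma Gadd x D :
  let y := INR x * bt - INR (G x) in let d := INR D * bt - INR (G D) in
  (y + d < 1 -> G (x + D) = (G x + G D)%nat) /\ (1 <= y + d -> G (x + D) = (G x + G D).+1).
Proof.
  move=> y d. have h1 := G_spec x. have h2 := G_spec D.
  split => h; apply G_uniq; rewrite ?S_INR !plus_INR; unfold y, d in h; lra.
Qed.

Lemma frac_nat x : frac (INR x * bt) = INR x * bt - INR (G x).
Proof. have h := G_spec x. rewrite (frac_char _ (Z.of_nat (G x))) -?INR_IZR_INZ //. Qed.

Lemma frac_nat_d x d : 0 <= d < 1 -> INR x * bt - INR (G x) + d < 1 ->
   frac (INR x * bt + d) = INR x * bt - INR (G x) + d.
Proof. move=> hd h. have h1 := G_spec x. rewrite (frac_char _ (Z.of_nat (G x))) -?INR_IZR_INZ; lra. Qed.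

Lemma nth_factor x p m t : (t < m)%nat -> nth 0%nat (factor x p m) t = x (p + t)%nat.
Proof. move=> h. rewrite /factor (nth_map 0%nat) ?size_iota // nth_iota //. Qed.

Lemma distinct_factors p D m n :
  let d := INR D * bt - INR (G D) in
  (fib n.+2 <= m.+1)%nat -> bt ^ n <= d -> bt ^ n <= 1 - d ->
  factor fibword p m <> factor fibword (p + D) m.
Proof.
  move=> d hm h1 h2 E.
  have hw : forall t, (t < m)%nat -> w (p + t) = w (p + D + t).
  { move=> t ht. rewrite -!fibword_w -(nth_factor fibword p m t ht) -(nth_factor fibword (p+D) m t ht).
    by rewrite E. }
  have dec : forall x, exists b, (b <= 1)%nat /\ G (x + D) = (G x + G D + b)%nat /\
       (b = 1%nat <-> 1 <= INR x * bt - INR (G x) + d).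
  { move=> x. have [A1 A2] := Gadd x D. rewrite -/d in A1 A2.
    case: (Rlt_le_dec (INR x * bt - INR (G x) + d) 1) => c.
    - exists 0%nat. rewrite (A1 c) addn0. split => //. split => //. split => //. lra.
    - exists 1%nat. rewrite (A2 c) addn1. by split. }
  have Bconst : forall t, (t <= m)%nat -> forall b0 b, 
      G (p + 1 + D) = (G (p+1) + G D + b0)%nat ->
      G (p + 1 + t + D) = (G (p + 1 + t) + G D + b)%nat -> b = b0.
  { elim => [|t IH] ht b0 b e0 e.
    - rewrite addn0 in e. lia.
    - have [b' [hb' [e' _]]] := dec (p + 1 + t)%nat.
      have := IH ltac:(lia) b0 b' e0 e'. move=> hb0.
      have := hw t ltac:(lia). rewrite /w.
      set x := (p + 1 + t)%nat in e' *.
      have ex1 : (p + t).+1 = x by rewrite /x; lia.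
      have ex2 : (p + t).+2 = x.+1 by rewrite /x; lia.
      have ex3 : (p + D + t).+1 = (x + D)%nat by rewrite /x; lia.
      have ex4 : (p + D + t).+2 = (x + D).+1 by rewrite /x; lia.
      have ex5 : (p + 1 + t.+1)%nat = x.+1 by rewrite /x; lia.
      have ex6 : (x.+1 + D)%nat = (x + D).+1 by lia.
      rewrite ex2 ex1 ex4 ex3. rewrite ex5 ex6 in e.
      have s1 := G_step x. have s2 := G_step (x + D)%nat.
      lia. }
  have [b0 [hb0 [e0 _]]] := dec (p + 1)%nat.
  have hb := bt_bounds.
  have d0 : 0 <= d. { have := pow_lt bt n ltac:(lra). lra. }
  have d1 : d < 1. { have := pow_lt bt n ltac:(lra). lra. }
  have [t1 [ht1 hx1]] := Hall n (INR (p + 1) * bt + d).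
  have [b1 [hb1 [e1 q1]]] := dec (p + 1 + t1)%nat.
  have y1 : 1 <= INR (p + 1 + t1) * bt - INR (G (p + 1 + t1)) + d.
  { case: (Rlt_le_dec (INR (p + 1 + t1) * bt - INR (G (p + 1 + t1)) + d) 1) => c //.
    have := frac_nat_d (p + 1 + t1) d (conj d0 d1) c.
    rewrite (plus_INR (p+1) t1) in c *. 

    have ee2 : INR (p + 1) * bt + d + INR t1 * bt = (INR (p + 1) + INR t1) * bt + d by ring.
    rewrite ee2 in hx1. move=> ee. rewrite ee in hx1. have := G_spec (p + 1 + t1). rewrite plus_INR. lra. }
  have := Bconst t1 ltac:(lia) b0 b1 e0 e1. move=> eb1.
  have : b1 = 1%nat by apply q1.
  have [t2 [ht2 hx2]] := Hall n (INR (p + 1) * bt).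
  have [b2 [hb2 [e2 q2]]] := dec (p + 1 + t2)%nat.
  have := Bconst t2 ltac:(lia) b0 b2 e0 e2. move=> eb2.
  have y2 : INR (p + 1 + t2) * bt - INR (G (p + 1 + t2)) + d < 1.
  { have := frac_nat (p + 1 + t2). rewrite (plus_INR (p + 1) t2) Rmult_plus_distr_r. move=> ee.
    rewrite ee in hx2. lra. }
  have : b2 <> 1%nat. { move=> hh. have := proj1 q2 hh. lra. }
  lia.
Qed.
Definition ph := 1 + bt.
Lemma ph_bt : ph * bt = 1. Proof. unfold ph. have := bt_sq. nra. Qed.
Lemma ph_sq : ph * ph = ph + 1. Proof. unfold ph. have := bt_sq. nra. Qed.
Lemma s5_bt : s5 = 1 + 2 * bt. Proof. unfold bt. lra. Qed.

Lemma binet n : s5 * INR (fib n) = ph ^ n - (- bt) ^ n.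
Proof.
  suff : s5 * INR (fib n) = ph ^ n - (- bt) ^ n /\ s5 * INR (fib n.+1) = ph ^ n.+1 - (- bt) ^ n.+1 by case.
  elim: n => [|n [IH1 IH2]].
  - simpl. rewrite s5_bt /ph. lra.
  - split => //. rewrite fibSS plus_INR Rmult_plus_distr_l IH1 IH2.
    have -> : ph ^ n.+2 = (ph * ph) * ph ^ n by rewrite /=; ring.
    have -> : (- bt) ^ n.+2 = (bt * bt) * (- bt) ^ n by rewrite /=; ring.
    rewrite ph_sq bt_sq /=. ring.
Qed.

Lemma php_bt n : ph ^ n * bt ^ n = 1.
Proof. by rewrite -Rpow_mult_distr ph_bt pow1. Qed.

Lemma bound_j r k : 1 < 2 * INR k * bt ^ r.+1 ->
  INR (2 * fib r.+2) <= 4 / sqrt 5 * golden_ratio * INR k.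
Proof.
  move=> h.
  have hb := bt_bounds. have hs := s5_bounds.
  have gph : golden_ratio = ph by rewrite /golden_ratio /ph /bt -/s5; field.
  rewrite gph -/s5.
  have pp : 0 < ph ^ r.+1 by apply pow_lt; unfold ph; lra.
  have bp : 0 < bt ^ r.+1 by apply pow_lt; lra.
  have e := php_bt r.+1.
  have hk : ph ^ r.+1 < 2 * INR k.
  { have : ph ^ r.+1 * 1 < ph ^ r.+1 * (2 * INR k * bt ^ r.+1) by apply Rmult_lt_compat_l.
    have -> : ph ^ r.+1 * (2 * INR k * bt ^ r.+1) = 2 * INR k * (ph ^ r.+1 * bt ^ r.+1) by ring.
    rewrite e. lra. }
  suff : s5 * INR (fib r.+2) <= 2 * ph * INR k.
  { move=> H. rewrite mult_INR. simpl INR at 1.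
    apply (Rmult_le_reg_l s5); first lra.
    have -> : s5 * (4 / s5 * ph * INR k) = 4 * ph * INR k by field; lra.
    lra. }
  have hph : ph ^ r.+2 = ph * ph ^ r.+1 by [].
  have hbt : bt ^ r.+2 = bt * bt ^ r.+1 by [].
  have php : 1 < ph by unfold ph; lra.
  rewrite binet negpow.
  case/boolP: (odd r.+2) => o.
  -
    have or : odd r by move: o => /=; rewrite negbK.
    pose L := (fib r + fib r.+2)%nat.
    have eL : INR L = ph ^ r.+1 + bt ^ r.+1.
    { apply (Rmult_eq_reg_l s5); last lra.
      rewrite /L plus_INR Rmult_plus_distr_l !binet !negpow /= or /=.
      rewrite s5_bt /ph.
      have qa : bt * bt * (1 + bt) ^ r = (1 - bt) * (1 + bt) ^ r by rewrite bt_sq.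
      have qb : bt * bt * bt ^ r = (1 - bt) * bt ^ r by rewrite bt_sq.
      nra. }
    have hL : (L <= 2 * k)%nat.
    { apply INR_lt1. rewrite mult_INR eL. simpl INR.
      have := pow_lt_1_compat bt r.+1 ltac:(lra) ltac:(lia). lra. }
    have hL' : INR L <= 2 * INR k.
    { have := le_INR _ _ (elimT leP hL). rewrite mult_INR. simpl INR. lra. }
    rewrite hph hbt. rewrite eL in hL'.
    have : bt * bt ^ r.+1 <= ph * bt ^ r.+1 by apply Rmult_le_compat_r; [lra| unfold ph; lra].
    nra.
  - rewrite hph hbt. nra.
Qed.
Lemma delta_ok r d k : (1 <= d)%nat -> (d < k)%nat -> 2 * INR k * bt ^ r.+2 <= 1 ->
  let D := (d * (2 * fib r.+2))%nat in
  bt ^ r.+1 <= INR D * bt - INR (G D) /\ bt ^ r.+1 <= 1 - (INR D * bt - INR (G D)).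
Proof.
  move=> hd hdk hk D.
  have hb := bt_bounds.
  have e := I1 r.+1.
  set F := INR (fib r.+1) in e.
  have bp : 0 < bt ^ r.+1 by apply pow_lt; lra.
  have hbt : bt ^ r.+2 = bt * bt ^ r.+1 by [].
  have bp2 : 0 < bt ^ r.+2 by apply pow_lt; lra.
  have ID : INR d >= 1 by apply Rle_ge; apply (le_INR 1); lia.
  have IK : INR d + 1 <= INR k by rewrite -S_INR; apply le_INR; lia.
  have eD : INR D * bt = 2 * INR d * F - 2 * INR d * (- bt) ^ r.+2.
  { rewrite /D !mult_INR. simpl INR at 2. have : INR (fib r.+2) * bt = F - (- bt) ^ r.+2 by lra.
    move=> h. have -> : INR d * ((1+1) * INR (fib r.+2)) * bt = 2 * INR d * (INR (fib r.+2) * bt) by ring. rewrite h. ring. }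
  set u := 2 * INR d * bt ^ r.+2.
  have u1 : 2 * bt ^ r.+2 <= u by rewrite /u; nra.
  have u2 : u <= 1 - 2 * bt ^ r.+2 by rewrite /u; nra.
  have u3 : bt ^ r.+1 <= 2 * bt ^ r.+2 by rewrite hbt; nra.
  have fp := fib_pos r.
  rewrite negpow in eD.
  have o2 : odd r.+2 = odd r by rewrite /= negbK.
  rewrite o2 in eD.
  case/boolP: (odd r) => o; rewrite ?o in eD; rewrite ?(negbTE o) in eD.
  - have eG : G D = (2 * d * fib r.+1)%nat.
    { apply G_uniq. rewrite eD !mult_INR -/F. simpl INR. have : 0 < u by nra. rewrite /u. nra. }
    rewrite eD eG !mult_INR -/F. simpl INR. rewrite /u in u1 u2. nra.
  - have eG : G D = (2 * d * fib r.+1 - 1)%nat.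
    { apply G_uniq. rewrite eD minus_INR; last (apply/leP; have : (0 < 2 * d * fib r.+1)%nat by rewrite !muln_gt0; lia). 
      2: lia.
      rewrite !mult_INR -/F. simpl INR. have : 0 < u by nra. rewrite /u. nra. }
    rewrite eD eG minus_INR; last (apply/leP; have : (0 < 2 * d * fib r.+1)%nat by rewrite !muln_gt0; lia).
    2: lia.
    rewrite !mult_INR -/F. simpl INR. rewrite /u in u1 u2. nra.
Qed.
Lemma min_exists (P : nat -> Prop) N : P N -> exists j, P j /\ (j = 0%nat \/ ~ P (j.-1)).
Proof.
  elim: N => [|N IH] h. { exists 0%nat. by split; [|left]. }
  case: (Classical_Prop.classic (P N)) => hN.
  - exact: IH.
  - exists N.+1. split => //. by right.
Qed.

Lemma antip_pair i m a b : (a < b)%nat ->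
  factor fibword (i + b * m) m = factor fibword ((i + a * m) + (b - a) * m) m.
Proof. move=> h. congr factor. rewrite mulnBl. have : (a * m <= b * m)%nat by apply: leq_mul; lia. lia. Qed.

Close Scope R_scope.
Theorem theorem6 :
  exists c : R,
    (c <= 4 / sqrt 5 * golden_ratio)%R /\
    forall k : nat, 0 < k ->
    forall i : nat,
      exists m : nat, 0 < m /\ (INR m <= c * INR k)%R /\ antipower_at fibword i k m.
Proof.
  Local Open Scope R_scope.
  exists (4 / sqrt 5 * golden_ratio). split; first lra.
  move=> k hk i.
  have hb := bt_bounds. have hs := s5_bounds.
  have gph : golden_ratio = ph by rewrite /golden_ratio /ph /bt -/s5; field.
  case: (ltnP 1 k) => hk2; last first.
  { have -> : k = 1%nat by lia.
    exists 1%nat. split; first lia. split.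
    - rewrite gph -/s5. simpl INR. apply (Rmult_le_reg_l s5); first lra.
      have -> : s5 * (4 / s5 * ph * 1) = 4 * ph by field; lra. unfold ph. lra.
    - by rewrite /antipower_at /=. }
  pose P := fun j => 2 * INR k * bt ^ j <= 1.
  have hK : 2 <= INR k by apply (le_INR 2); lia.
  have [N HN] : exists N, P N.
  { have [N HN] := pow_lt_1_zero bt ltac:(rewrite Rabs_pos_eq; lra) (/ (2 * INR k)) ltac:(apply Rinv_0_lt_compat; lra).
    exists N. have := HN N (le_n N). rewrite Rabs_pos_eq; last (apply pow_le; lra).
    move=> h. rewrite /P. 
    have -> : 1 = (2 * INR k) * / (2 * INR k) by field; lra.
    have : 0 < 2 * INR k by lra. nra. }
  have [j [Pj Hj]] := min_exists P N HN.
  case: j Pj Hj => [|[|r]] Pj Hj.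
  { exfalso. move: Pj. rewrite /P /=. lra. }
  { exfalso. move: Pj. rewrite /P /=. nra. }
  case: Hj => // Hj. simpl in Hj.
  have Hr : 1 < 2 * INR k * bt ^ r.+1 by rewrite /P in Hj; lra.
  exists (2 * fib r.+2)%nat. split.
  { have := fib_pos r.+1. lia. }
  split.
  { rewrite gph. have := bound_j r k Hr. by rewrite gph. }
  rewrite /antipower_at map_inj_in_uniq ?iota_uniq //.
  move=> a b ha hb' E.
  rewrite !mem_iota !add0n in ha hb'.
  case: (ltngtP a b) => // hab; exfalso.
  - have := delta_ok r (b - a) k ltac:(lia) ltac:(lia) Pj. move=> [d1 d2].
    apply: (distinct_factors (i + a * (2 * fib r.+2)) ((b - a) * (2 * fib r.+2)) (2 * fib r.+2) r.+1) => //.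
    + have := fib_mono r.+1. rewrite (fibSS r.+1). lia.
    + by rewrite -antip_pair.
  - have := delta_ok r (a - b) k ltac:(lia) ltac:(lia) Pj. move=> [d1 d2].
    apply: (distinct_factors (i + b * (2 * fib r.+2)) ((a - b) * (2 * fib r.+2)) (2 * fib r.+2) r.+1) => //.
    + have := fib_mono r.+1. rewrite (fibSS r.+1). lia.
    + by rewrite -antip_pair.
Qed.
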